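(* Let $\mathbb{F}$ be a finite field, $m>1$ an integer, and $R=\mathbb{F}^{m\times m}$. Then the homogeneous weight partition $\mathcal{P}_{\mathrm{hom}}$ of $R$ is self-dual: for any generating character $\chi$ of $R$, $\mathcal{P}_{\mathrm{hom}}$ equals its left $\chi$-dual partition.
   Context: $\mathcal{P}_{\mathrm{hom}}$ is the partition of $R$ into level sets of the normalized homogeneous weight $\omega$ (the unique map $R\to\mathbb{R}$ with $\omega(0)=0$, $\omega(x)=\omega(y)$ whenever $Rx=Ry$, and $\sum_{y\in Rx}\omega(y)=|Rx|$ for $x\neq0$). Characters are group homomorphisms $(R,+)\to\mathbb{C}^*$; $\widehat{R}$ is an $R$-$R$-bimodule via $(r\cdot\chi)(v)=\chi(vr)$, $(\chi\cdot r)(v)=\chi(rv)$; a generating character is $\chi$ with $\widehat{R}=R\cdot\chi$. For a partition $\mathcal{P}=P_1\mid\cdots\mid P_M$ of $R$, its left $\chi$-dual partition is given by the equivalence relation $b\sim b'$ iff $\sum_{a\in P_i}\chi(ab)=\sum_{a\in P_i}\chi(ab')$ for all $i$. Two partitions are equal if their blocks coincide up to ordering. *)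

(* Defs.v *)
From HB Require Import structures.
From mathcomp Require Import all_boot all_order all_algebra all_field.
From mathcomp Require Import reals.
Set Implicit Arguments. Unset Strict Implicit. Unset Printing Implicit Defensive.
Import Order.TTheory GRing.Theory Num.Theory.
Local Open Scope ring_scope.

Section Defs.
Variables (F : finFieldType) (m : nat).
Local Notation M := 'M[F]_m.

Definition lideal (x : M) : {set M} := [set r *m x | r : M].

Definition is_norm_hom_weight (Rr : realType) (w : M -> Rr) : Prop :=
  [/\ w 0 = 0,
      (forall x y : M, lideal x = lideal y -> w x = w y) &
      (forall x : M, x != 0 -> \sum_(y in lideal x) w y = #|lideal x|%:R)].

Definition level_partition (Rr : realType) (w : M -> Rr) : {set {set M}} :=
  [set [set a | w a == w x] | x : M].

(* characters (R,+) -> C^* ; values taken in algC (all roots of unity lie there) *)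
Definition is_character (chi : M -> algC) : Prop :=
  (forall x y : M, chi (x + y) = chi x * chi y) /\ (forall x : M, chi x != 0).

Definition generating_character (chi : M -> algC) : Prop :=
  is_character chi /\
  forall psi : M -> algC, is_character psi ->
    exists r : M, forall v : M, psi v = chi (v *m r).

Definition left_dual_rel (P : {set {set M}}) (chi : M -> algC) (b b' : M) : bool :=
  [forall B in P, \sum_(a in B) chi (a *m b) == \sum_(a in B) chi (a *m b')].

Definition left_dual_partition (P : {set {set M}}) (chi : M -> algC) : {set {set M}} :=
  [set [set b' | left_dual_rel P chi b b'] | b : M].

End Defs.

(* Main.v *)
Require Import Defs.
From HB Require Import structures.
From mathcomp Require Import all_boot all_order all_algebra all_field.
From mathcomp Require Import reals.
From mathcomp Require Import all_fingroup all_character.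
From mathcomp Require Import ring lra.
Set Implicit Arguments. Unset Strict Implicit. Unset Printing Implicit Defensive.
Import Order.TTheory GRing.Theory Num.Theory.
Local Open Scope ring_scope.
Lemma sep_char (F : finFieldType) m (x : 'M[F]_m) :
  x != 0 -> exists psi, is_character psi /\ psi x != 1.
Proof.
move=> nz.
pose gT := FinRing.Zmodule_to_finGroup 'M[F]_m.
have ab : abelian [set: gT] := FinRing.zmod_abelian _.
have lin := (elimT (char_abelianP [set: gT]%G)) ab.
case: (boolP [forall i : Iirr [set: gT]%G, 'chi_i (x : gT) == 1]) => [/forallP all1 | ].
  exfalso.
  have := cfRegE [set: gT]%G (x:gT).
  rewrite cfReg_sum sum_cfunE.
  have -> : ((x : gT) == 1%g) = false by apply/negbTE.
  rewrite mulr0n.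
  under eq_bigr => i _ do rewrite cfunE (lin_char1 (lin i)) (eqP (all1 i)) mulr1.
  rewrite sumr_const card_ord => /eqP; rewrite pnatr_eq0.
  by apply/negP; rewrite -lt0n; exact: (leq_ltn_trans (leq0n _) (ltn_ord (0 : Iirr [set: gT]%G))).
rewrite negb_forall => /existsP [i ne].
exists (fun y => 'chi_i (y : gT)); split => //; split.
  by move=> a b; apply: (lin_charM (lin i)); rewrite inE.
by move=> a; apply: (lin_char_neq0 (lin i)); rewrite inE.
Qed.
Section Chi.
Variables (F : finFieldType) (m : nat) (chi : 'M[F]_m -> algC).
Hypothesis Hchi : generating_character chi.
Local Notation M := 'M[F]_m.

Lemma chiD (x y : M) : chi (x + y) = chi x * chi y.
Proof. by case: Hchi => [[]]. Qed.
Lemma chi_neq0 (x : M) : chi x != 0.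
Proof. by case: Hchi => [[]]. Qed.
Lemma chi0 : chi 0 = 1.
Proof.
have H := chiD 0 0; rewrite addr0 in H.
by apply: (mulfI (chi_neq0 0)); rewrite mulr1 -H.
Qed.
Lemma chiN (x : M) : chi (- x) = (chi x)^-1.
Proof.
apply: (mulfI (chi_neq0 x)); rewrite -chiD subrr chi0 divff //; exact: chi_neq0.
Qed.
Lemma chiB (x y : M) : chi (x - y) = chi x / chi y.
Proof. by rewrite chiD chiN. Qed.

Lemma h_inj (x y : M) : (forall r, chi (x *m r) = chi (y *m r)) -> x = y.
Proof.
move=> H; apply/eqP; rewrite -subr_eq0; apply/negP => nz.
have nz' : x - y != 0 by apply/negP.
have [psi [Cpsi ne]] := sep_char nz'.
have [r0 Hr0] := Hchi.2 psi Cpsi.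
move: ne; rewrite Hr0 mulmxBl chiB H divff ?eqxx //; exact: chi_neq0.
Qed.

Definition phi (x : M) : M :=
  odflt 0 [pick r | [forall y, chi (x *m y) == chi (y *m r)]].

Lemma phiP (x y : M) : chi (x *m y) = chi (y *m phi x).
Proof.
rewrite /phi; case: pickP => [r /forallP H | H] /=; first exact/eqP.
have Cpsi : is_character (fun y => chi (x *m y)).
  by split=> [a b|a]; rewrite ?mulmxDr ?chiD ?chi_neq0.
have [r Hr] := Hchi.2 _ Cpsi.
have := H r; move/negP; case; apply/forallP => z; rewrite Hr //.
Qed.

Lemma phi_inj : injective phi.
Proof.
move=> x x' E; apply: h_inj => r; by rewrite (phiP x) (phiP x') E.
Qed.

Lemma phi_surj (r : M) : exists x, phi x = r.
Proof.
have [g g1 g2] := injF_bij phi_inj.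
by exists (g r).
Qed.

Lemma f_inj (r r' : M) : (forall y, chi (y *m r) = chi (y *m r')) -> r = r'.
Proof.
move=> H; have [x Ex] := phi_surj r; have [x' Ex'] := phi_surj r'.
rewrite -Ex -Ex' in H *.
apply: f_equal; apply: h_inj => y; rewrite (phiP x) (phiP x'); exact: H.
Qed.

Lemma left_nondeg (z : M) : z != 0 -> exists a, chi (a *m z) != 1.
Proof.
move=> nz; case: (boolP [exists a, chi (a *m z) != 1]) => [/existsP // | ].
rewrite negb_exists => /forallP H.
move/negP: nz; case; apply/eqP; apply: f_inj => y.
by rewrite mulmx0 chi0; apply/eqP; have := H y; rewrite negbK.
Qed.

Lemma sum_chi (z : M) : z != 0 -> \sum_a chi (a *m z) = 0.
Proof.
move=> /left_nondeg [a0 ne].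
have E : \sum_a chi (a *m z) = chi (a0 *m z) * \sum_a chi (a *m z).
  rewrite mulr_sumr (reindex_inj (addrI a0)) /=.
  by apply: eq_bigr => a _; rewrite mulmxDl chiD.
apply/eqP; move: E => /eqP; rewrite -subr_eq0 -{1}(mul1r (\sum_a _)) -mulrBl.
by rewrite mulf_eq0 subr_eq0 eq_sym (negbTE ne).
Qed.

Lemma sum_chi0 : \sum_(a : M) chi (a *m 0) = #|M|%:R.
Proof. by under eq_bigr => a _ do rewrite mulmx0 chi0; rewrite sumr_const. Qed.

Lemma U_lemma (U : M) : U \in unitmx ->
  exists U', U' \in unitmx /\ forall y, chi (U *m y) = chi (y *m U').
Proof.
move=> uU; exists (phi U); split; last exact: phiP.
rewrite -row_free_unit -kermx_eq0; apply: contraT => nz.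
have [a ne] := left_nondeg nz.
case/negP: ne.
have H : forall w, chi (U *m (w *m kermx (phi U))) = 1.
  by move=> w; rewrite phiP -mulmxA mulmx_ker mulmx0 chi0.
by apply/eqP; rewrite -(H (invmx U *m a)) !mulmxA mulmxV // mul1mx.
Qed.

Lemma V_lemma (V : M) : V \in unitmx ->
  exists V', V' \in unitmx /\ forall y, chi (y *m V) = chi (V' *m y).
Proof.
move=> uV; have [V' EV] := phi_surj V; exists V'; split; last first.
  by move=> y; rewrite (phiP V') EV.
rewrite -unitmx_tr -row_free_unit -kermx_eq0; apply: contraT => nz.
pose z := (kermx V'^T)^T.
have Vz : V' *m z = 0 by apply: trmx_inj; rewrite trmx_mul trmxK mulmx_ker trmx0.
have z0 : z != 0 by rewrite /z trmx_eq0.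
case/negP: z0; apply/eqP; apply: h_inj => r.
rewrite mul0mx chi0.
have := phiP V' (z *m (r *m invmx V)); rewrite mulmxA Vz mul0mx chi0 EV.
by rewrite -!mulmxA mulVmx ?mulmx1.
Qed.

End Chi.
Section Rk.
Variables (F : finFieldType) (m : nat).
Local Notation M := 'M[F]_m.

Lemma rank_colr d (r : 'rV[F]_m) (Z : 'M[F]_(d, m)) :
  \rank (col_mx r Z) = (\rank Z + ~~ (r <= Z)%MS)%N.
Proof.
have E : \rank (col_mx r Z) = \rank (r + Z)%MS.
  by apply/eqmx_rank/eqmxP/eqmx_sym/addsmxE.
rewrite E; case: (boolP (r <= Z)%MS) => rZ /=.
  by rewrite addn0; apply/eqmx_rank/eqmxP/addsmx_idPr.
have := mxrank_sum_cap r Z.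
have -> : \rank (r :&: Z)%MS = 0%N.
  apply/eqP; rewrite -leqn0.
  have := mxrank_leqif_sup (capmxSl r Z).
  case=> le /= eqc.
  have r1 : \rank r = 1%N.
    by rewrite rank_rV; apply/eqP; rewrite eqb1; apply: contra rZ => /eqP ->; rewrite sub0mx.
  move: le; rewrite r1 leq_eqVlt; case/orP => [/eqP h|]; last by rewrite ltnS.
  have := eqc; rewrite h r1 eqxx => /esym rc.
  by case/negP: rZ; apply: submx_trans (capmxSr r Z).
rewrite addn0 => ->; rewrite rank_rV addnC; congr (_ + _)%N.
by apply/eqP; rewrite eqb1; apply: contra rZ => /eqP ->; rewrite sub0mx.
Qed.

Lemma card_subrow d (Z : 'M[F]_(d, m)) :
  #|[set r : 'rV[F]_m | (r <= Z)%MS]| = (#|F| ^ \rank Z)%N.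
Proof.
have -> : [set r : 'rV[F]_m | (r <= Z)%MS] = [set u *m row_base Z | u : 'rV[F]_(\rank Z)].
  apply/setP => r; rewrite inE; apply/idP/imsetP.
    rewrite -(eq_row_base Z) => /submxP [u ->]; by exists u.
  by case=> u _ ->; apply: submx_trans (submxMl u _) _; rewrite eq_row_base ?submx_refl.
rewrite card_imset; last exact: row_free_inj (row_base_free Z).
by rewrite card_mx mul1n.
Qed.

Lemma rank_unit_mul (U a V : M) : U \in unitmx -> V \in unitmx ->
  \rank (U *m a *m V) = \rank a.
Proof.
move=> uU uV; rewrite mxrankMfree ?row_free_unit //.
by rewrite -mxrank_tr trmx_mul mxrankMfree ?mxrank_tr // row_free_unit unitmx_tr.
Qed.

End Rk.
Section Gs.
Variables (F : finFieldType) (m : nat) (Rr : realType).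
Local Notation q := (#|F|%:R : Rr).

Lemma cardF_gt1 : (1 < #|F|)%N.
Proof. by apply/card_gt1P; exists 0, 1; rewrite !inE eq_sym oner_neq0. Qed.

Lemma q_ge2 : 2 <= q.
Proof. by rewrite ler_nat cardF_gt1. Qed.

Fixpoint Hs (j : nat) : Rr :=
  if j is j'.+1 then Hs j' * (q ^+ j' / (q ^+ m - q ^+ j')) else 1.
Definition Gs (j : nat) : Rr := (-1) ^+ j * Hs j.

Lemma qX_gt0 j : 0 < q ^+ j.
Proof. apply: exprn_gt0; have := q_ge2; lra. Qed.

Lemma qX_lt j k : (j < k)%N -> q ^+ j < q ^+ k.
Proof. by move=> jk; rewrite ltr_eXn2l //; have := q_ge2; lra. Qed.

Lemma qX_S j : q ^+ j.+1 = q ^+ j * q.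
Proof. by rewrite exprSr. Qed.

Lemma qX_le j k : (j <= k)%N -> q ^+ j <= q ^+ k.
Proof. rewrite leq_eqVlt => /orP [/eqP -> //| /qX_lt]; lra. Qed.

Lemma c_pos j : (j < m)%N -> 0 < q ^+ j / (q ^+ m - q ^+ j).
Proof.
move=> jm; apply: divr_gt0; first exact: qX_gt0.
by have := qX_lt jm; lra.
Qed.

Lemma c_le1 j : (j < m)%N -> q ^+ j / (q ^+ m - q ^+ j) <= 1.
Proof.
move=> jm; have hp : 0 < q ^+ m - q ^+ j by have := qX_lt jm; lra.
rewrite ler_pdivrMr // mul1r.
have h1 := qX_le jm; rewrite qX_S in h1.
have h2 := qX_gt0 j; have h3 := q_ge2; nra.
Qed.

Lemma c_lt1 j : (j.+1 < m)%N -> q ^+ j / (q ^+ m - q ^+ j) < 1.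
Proof.
move=> jm; have jm' : (j < m)%N by apply: ltnW.
have hp : 0 < q ^+ m - q ^+ j by have := qX_lt jm'; lra.
rewrite ltr_pdivrMr // mul1r.
have h1 := qX_le jm; rewrite !qX_S in h1.
have h2 := qX_gt0 j; have h3 := q_ge2.
have h4 : q ^+ j * 2 <= q ^+ j * q by rewrite ler_pM2l.
have h5 : q ^+ j * q * 2 <= q ^+ j * q * q by rewrite ler_pM2l ?mulr_gt0 //; lra.
lra.
Qed.

Lemma H_pos j : (j <= m)%N -> 0 < Hs j.
Proof.
elim: j => [|j IH] jm /=; first lra.
by apply: mulr_gt0; [apply: IH; apply: ltnW | apply: c_pos].
Qed.

Lemma H_step j : (j < m)%N -> Hs j.+1 <= Hs j.
Proof.
move=> jm /=; have := c_le1 jm; have := H_pos (ltnW jm); nra.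
Qed.

Lemma H_le j k : (j <= k)%N -> (k <= m)%N -> Hs k <= Hs j.
Proof.
move=> jk km; elim: k jk km => [|k IH] jk km.
  by move: jk; rewrite leqn0 => /eqP ->.
move: jk; rewrite leq_eqVlt => /orP [/eqP -> //| ]; rewrite ltnS => jk.
apply: le_trans (H_step km) (IH jk (ltnW km)).
Qed.

Lemma H_lt j k : (j.+2 <= k)%N -> (k <= m)%N -> Hs k < Hs j.
Proof.
move=> jk km.
have h1 : Hs k <= Hs j.+2 by apply: H_le.
have jm : (j.+1 < m)%N by apply: leq_trans jk km.
have h2 : Hs j.+2 <= Hs j.+1 by apply: H_step.
have h3 : Hs j.+1 < Hs j.
  rewrite /=; have := c_lt1 jm; have := H_pos (ltnW (ltnW jm)); nra.
lra.
Qed.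

Lemma G_inj j k : (j <= m)%N -> (k <= m)%N -> Gs j = Gs k -> j = k.
Proof.
wlog jk : j k / (j <= k)%N.
  move=> W jm km E; case: (leqP j k) => h; first exact: W.
  by apply/esym; apply: W => //; apply: ltnW.
move=> jm km; rewrite /Gs -(signr_odd _ j) -(signr_odd _ k).
have Hj := H_pos jm; have Hk := H_pos km.
case: (boolP (odd j == odd k)) => [/eqP ojk | ne].
  move=> E; rewrite -ojk in E; have E2 : Hs j = Hs k.
    by apply: (mulfI (x := (-1) ^+ odd j)); rewrite ?signr_eq0.
  move: jk; rewrite leq_eqVlt => /orP [/eqP //|]; rewrite leq_eqVlt => /orP [/eqP e|jk].
    by move: ojk; rewrite -e /=; case: (odd j).
  by exfalso; have := H_lt jk km; lra.
move=> E; exfalso; move: ne E.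
by case: (odd j); case: (odd k) => //= _; rewrite ?expr1 ?expr0; lra.
Qed.

Lemma Grec j : (j < m)%N -> q ^+ j * Gs j + (q ^+ m - q ^+ j) * Gs j.+1 = 0.
Proof.
move=> jm; have hp : q ^+ m - q ^+ j != 0 by have := qX_lt jm; lra.
rewrite /Gs /= exprS; field.
exact: hp.
Qed.

End Gs.
Section Wt.
Variables (F : finFieldType) (m : nat) (Rr : realType).
Local Notation M := 'M[F]_m.
Local Notation G := (@Gs F m Rr).
Local Notation q := (#|F|%:R : Rr).

Lemma sum_rows d : (d < m)%N -> \sum_(Z : 'M[F]_(1 + d, m)) G (\rank Z) = 0.
Proof.
move=> dm.
rewrite (reindex (fun p : 'rV[F]_m * 'M[F]_(d, m) => col_mx p.1 p.2)) /=; last first.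
  exists (fun Z => (usubmx Z, dsubmx Z)) => [[r Z] _ | Z _] /=.
    by rewrite col_mxKu col_mxKd.
  by rewrite vsubmxK.
rewrite -(pair_big predT predT (fun r Z => G (\rank (col_mx r Z)))) /=.
rewrite exchange_big /=; apply: big1 => Z _.
under eq_bigr => r _ do rewrite rank_colr.
rewrite (bigID (fun r => (r <= Z)%MS)) /=.
under eq_bigr => r rZ do rewrite rZ addn0.
under [X in _ + X]eq_bigr => r rZ do rewrite rZ addn1.
rewrite !sumr_const.
have rZm : (\rank Z < m)%N := leq_ltn_trans (rank_leq_row Z) dm.
have c1 : #|(fun i : 'rV[F]_m => (i <= Z)%MS)| = (#|F| ^ \rank Z)%N.
  by rewrite -(card_subrow Z); apply: eq_card => r; rewrite inE.
have c2 : #|(fun i : 'rV[F]_m => ~~ (i <= Z)%MS)| = (#|F| ^ m - #|F| ^ \rank Z)%N.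
  rewrite -c1; have := cardC (fun i : 'rV[F]_m => (i <= Z)%MS); rewrite card_mx mul1n => <-.
  by rewrite addKn; apply: eq_card.
rewrite c1 c2 -mulr_natr -[X in _ + X]mulr_natr natrB ?natrX; last first.
  by rewrite leq_exp2l ?cardF_gt1 // ltnW.
by rewrite mulrC [G _.+1 * _]mulrC; apply: Grec.
Qed.

Lemma sum_cols n : (0 < n)%N -> (n <= m)%N -> \sum_(Y : 'M[F]_(m, n)) G (\rank Y) = 0.
Proof.
case: n => // d _ dm.
rewrite (reindex (@trmx F d.+1 m)) /=; last first.
  by exists (@trmx F m d.+1) => Z _; rewrite trmxK.
under eq_bigr => Z _ do rewrite mxrank_tr.
exact: (sum_rows dm).
Qed.

Lemma lidealE (x : M) : lideal x = [set Y *m row_base x | Y : 'M[F]_(m, \rank x)].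
Proof.
apply/setP => y; apply/imsetP/imsetP => [[r _ ->] | [Y _ ->]].
  have : (r *m x <= row_base x)%MS by rewrite eq_row_base submxMl.
  by case/submxP => D ->; exists D.
have : (Y *m row_base x <= x)%MS.
  by apply: submx_trans (submxMl Y _) _; rewrite eq_row_base ?submx_refl.
by case/submxP => D ->; exists D.
Qed.

Lemma lideal_submx (x y : M) : (y \in lideal x) = (y <= x)%MS.
Proof.
apply/imsetP/idP => [[r _ ->] | /submxP [D ->]]; first exact: submxMl.
by exists D.
Qed.

Lemma sum_lideal (x : M) : x != 0 -> \sum_(y in lideal x) G (\rank y) = 0.
Proof.
move=> nz; rewrite lidealE big_imset /=; last first.
  by move=> a b _ _; exact: (row_free_inj (row_base_free x)).
under eq_bigr => Y _ do rewrite mxrankMfree ?row_base_free //.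
have h0 : (0 < \rank x)%N by rewrite lt0n mxrank_eq0.
apply: etrans (sum_cols h0 (rank_leq_row x)); apply: eq_bigl => Y; by rewrite ?inE.
Qed.

Definition ws (y : M) : Rr := 1 - G (\rank y).

Lemma mem_lideal (x : M) : x \in lideal x.
Proof. by rewrite lideal_submx submx_refl. Qed.

Lemma ws_hom : is_norm_hom_weight ws.
Proof.
split.
- by rewrite /ws mxrank0 /Gs /= mulr1 subrr.
- move=> x y E; rewrite /ws; congr (1 - G _).
  have hx : (x <= y)%MS by rewrite -lideal_submx -E mem_lideal.
  have hy : (y <= x)%MS by rewrite -lideal_submx E mem_lideal.
  by apply/eqP; rewrite eqn_leq !mxrankS.
- move=> x nz; rewrite /ws sumrB sum_lideal // subr0 sumr_const.
  by rewrite -mulr_natr mul1r.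
Qed.

Lemma lideal_sub (x y : M) : y \in lideal x -> lideal y \subset lideal x.
Proof.
rewrite lideal_submx => yx; apply/subsetP => z; rewrite !lideal_submx => zy.
exact: submx_trans zy yx.
Qed.

Lemma hom_unique (w1 w2 : M -> Rr) :
  is_norm_hom_weight w1 -> is_norm_hom_weight w2 -> forall x, w1 x = w2 x.
Proof.
case=> W10 W12 W13 [W20 W22 W23].
suff H : forall n x, (#|lideal x| <= n)%N -> w1 x = w2 x.
  by move=> x; apply: (H _ x (leqnn _)).
elim=> [|n IH] x Hx.
  by move: Hx; rewrite leqn0 => /eqP/cards0_eq/setP/(_ x); rewrite mem_lideal inE.
case: (eqVneq x 0) => [->|nz]; first by rewrite W10 W20.
have E := W13 x nz; rewrite -(W23 x nz) in E.
rewrite (bigID (fun y => lideal y == lideal x)) /= in E.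
rewrite [in RHS](bigID (fun y => lideal y == lideal x)) /= in E.
have E2 : \sum_(i in lideal x | lideal i != lideal x) w1 i =
          \sum_(i in lideal x | lideal i != lideal x) w2 i.
  apply: eq_bigr => y /andP [yx ne]; apply: IH.
  rewrite -ltnS; apply: leq_trans Hx; apply: proper_card.
  by rewrite properEneq ne lideal_sub.
rewrite E2 in E; move/addIr: E.
under eq_bigr => y /andP [_ /eqP ey] do rewrite (W12 _ _ ey).
under [in RHS]eq_bigr => y /andP [_ /eqP ey] do rewrite (W22 _ _ ey).
rewrite !sumr_const => E.
move: E; set k := #|_| => E.
have pos : (0 < k)%N.
  by apply/card_gt0P; exists x; rewrite unfold_in /= mem_lideal eqxx.
move: E; rewrite -[LHS]mulr_natr -[RHS]mulr_natr; apply: mulIf.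
by rewrite pnatr_eq0 -lt0n.
Qed.

Lemma w_rank (w : M -> Rr) : is_norm_hom_weight w -> forall x, w x = 1 - G (\rank x).
Proof. move=> Hw x; exact: (hom_unique Hw ws_hom x). Qed.

End Wt.

Section Main.
Variables (F : finFieldType) (m : nat) (Rr : realType).
Variable (w : 'M[F]_m -> Rr).
Hypothesis Hw : is_norm_hom_weight w.
Variable (chi : 'M[F]_m -> algC).
Hypothesis Hchi : generating_character chi.
Local Notation M := 'M[F]_m.
Local Notation G := (@Gs F m Rr).

Definition Crank (x : M) : {set M} := [set a : M | \rank a == \rank x].

Lemma level_eq : level_partition w = [set Crank x | x : M].
Proof.
rewrite /level_partition; apply: eq_imset => x; apply/setP => a.
rewrite !inE !(w_rank Hw); apply/eqP/eqP => [E | ->] //.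
apply: (@G_inj F m Rr _ _ (rank_leq_row a) (rank_leq_row x)).
by move/addrI/oppr_inj: E.
Qed.

Lemma rank_equiv (a b : M) : \rank a = \rank b ->
  exists U V, [/\ U \in unitmx, V \in unitmx & b = U *m a *m V].
Proof.
move=> E.
set Ca := col_ebase a; set Ra := row_ebase a; set Cb := col_ebase b; set Rb := row_ebase b.
have uCa : Ca \in unitmx by apply: col_ebase_unit.
have uRa : Ra \in unitmx by apply: row_ebase_unit.
exists (Cb *m invmx Ca), (invmx Ra *m Rb); split.
- by rewrite unitmx_mul unitmx_inv uCa /Cb col_ebase_unit.
- by rewrite unitmx_mul unitmx_inv uRa /Rb row_ebase_unit.
rewrite -{1}(mulmx_ebase a) -/Ca -/Ra -{1}(mulmx_ebase b) -/Cb -/Rb -E.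
rewrite !mulmxA -[Cb *m _ *m Ca]mulmxA mulVmx // mulmx1.
by rewrite -[_ *m Ra *m invmx Ra]mulmxA mulmxV // mulmx1.
Qed.

Lemma rank_reindex (Fn : M -> algC) (x U V : M) : U \in unitmx -> V \in unitmx ->
  \sum_(a in Crank x) Fn (U *m a *m V) = \sum_(a in Crank x) Fn a.
Proof.
move=> uU uV.
have inj : injective (fun a : M => U *m a *m V).
  apply: (can_inj (g := fun a : M => invmx U *m a *m invmx V)) => a.
  by rewrite !mulmxA mulVmx // mul1mx -mulmxA mulmxV // mulmx1.
rewrite [RHS](reindex_inj inj) /=; apply: eq_bigl => a.
by rewrite !inE rank_unit_mul.
Qed.

Lemma rel_of_rank (b b' : M) : \rank b = \rank b' ->
  left_dual_rel (level_partition w) chi b b'.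
Proof.
move=> E; apply/forallP => B; apply/implyP; rewrite level_eq => /imsetP [x _ ->].
have [U [V [uU uV ->]]] := rank_equiv E.
have [V' [uV' HV']] := V_lemma Hchi uV.
apply/eqP; under [RHS]eq_bigr => a _ do rewrite !mulmxA HV' !mulmxA.
by rewrite (rank_reindex (fun z => chi (z *m b)) x uV' uU).
Qed.

Definition Psi (b a : M) := \sum_(c in Crank b) chi (- (a *m c)).

Lemma Psi_inv (b a a' : M) : \rank a = \rank a' -> Psi b a = Psi b a'.
Proof.
move=> E; have [U [V [uU uV ->]]] := rank_equiv E.
have [U' [uU' HU']] := U_lemma Hchi uU.
rewrite /Psi; apply/esym.
under eq_bigr => c _ do rewrite -!mulmxA -mulmxN HU' -mulNmx -!mulmxA.
under eq_bigr => c _ do rewrite mulNmx.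
rewrite -(rank_reindex (fun z => chi (- (a *m z))) b uV uU') //.
apply: eq_bigr => c _; by rewrite !mulmxA.
Qed.

Definition rk (a : M) : 'I_m.+1 := inord (\rank a).

Lemma rk_eq (a : M) (k : 'I_m.+1) : (rk a == k) = (\rank a == k).
Proof.
by rewrite /rk -(inj_eq val_inj) /= inordK // ltnS rank_leq_row.
Qed.

Lemma X_split (b b' : M) : left_dual_rel (level_partition w) chi b b' ->
  \sum_a chi (a *m b) * Psi b a = \sum_a chi (a *m b') * Psi b a.
Proof.
move/forallP => R.
rewrite (partition_big rk predT) //= [RHS](partition_big rk predT) //=.
apply: eq_bigr => k _.
have rk_pid : \rank (pid_mx k : M) = k by rewrite rank_pid_mx // -ltnS.
have inP : Crank (pid_mx k) \in level_partition w by rewrite level_eq imset_f.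
have := R (Crank (pid_mx k)); rewrite inP /= => /eqP Ek.
have E1 : forall c : M, \sum_(a | rk a == k) chi (a *m c) * Psi b a =
   Psi b (pid_mx k) * \sum_(a in Crank (pid_mx k)) chi (a *m c).
  move=> c; rewrite mulr_sumr; apply: eq_big => a.
    by rewrite rk_eq inE rk_pid.
  rewrite rk_eq => /eqP ra; rewrite mulrC; congr (_ * _).
  by apply: Psi_inv; rewrite ra rk_pid.
by rewrite !E1 Ek.
Qed.

Lemma X_val (b c : M) :
  \sum_a chi (a *m c) * Psi b a = (#|M|%:R) *+ (c \in Crank b) * 0 + 
     \sum_(d in Crank b) \sum_a chi (a *m (c - d)).
Proof.
rewrite mulr0 add0r /Psi; under eq_bigr => a _ do rewrite mulr_sumr.
rewrite exchange_big /=; apply: eq_bigr => d _; apply: eq_bigr => a _.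
by rewrite mulmxBr chiD.
Qed.

Lemma rel_rank (b b' : M) : left_dual_rel (level_partition w) chi b b' ->
  \rank b' = \rank b.
Proof.
move=> R; apply/eqP; apply: contraT => ne.
have E := X_split R.
rewrite !X_val !mulr0 !add0r in E.
have L : \sum_(d in Crank b) \sum_a chi (a *m (b - d)) = #|M|%:R.
  rewrite (bigD1 b) /=; last by rewrite inE.
  rewrite subrr (sum_chi0 Hchi) big1 ?addr0 // => d /andP [_ nd].
  by apply: (sum_chi Hchi); rewrite subr_eq0 eq_sym.
have R0 : \sum_(d in Crank b) \sum_a chi (a *m (b' - d)) = 0.
  apply: big1 => d; rewrite inE => /eqP rd.
  apply: (sum_chi Hchi); rewrite subr_eq0; apply: contra ne => /eqP ->.
  by rewrite rd.
move: E; rewrite L R0 => /eqP; rewrite pnatr_eq0 => /eqP M0.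
have h : (0 < #|M|)%N by apply/card_gt0P; exists 0.
by rewrite M0 in h.
Qed.

End Main.

Theorem theorem5p9 (F : finFieldType) (m : nat) (Hm : (1 < m)%N)
  (Rr : realType) (w : 'M[F]_m -> Rr) (Hw : is_norm_hom_weight w)
  (chi : 'M[F]_m -> algC) (Hchi : generating_character chi) :
  left_dual_partition (level_partition w) chi = level_partition w.
Proof.
rewrite /left_dual_partition [RHS](level_eq Hw); apply: eq_imset => b.
apply/setP => b'; rewrite !inE; apply/idP/eqP => [/(rel_rank Hw Hchi) // | E].
exact: (rel_of_rank Hw Hchi (esym E)).
Qed.
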